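(* A non-archimedean Polish group $G$ is extremely amenable if and only if every continuous action of $G$ on the Cantor space $D^{\aleph_0}=\{0,1\}^{\mathbb N}$ has a fixed point.
   Context: A Polish group is a separable completely metrizable topological group; it is non-archimedean if it is Hausdorff and has a neighbourhood base at the identity consisting of open subgroups. A topological group is extremely amenable if every continuous action of it on a compact Hausdorff space has a fixed point. *)

(* Defs.v *)
From Stdlib Require Import Reals List.
Open Scope R_scope.

Definition is_topology {X : Type} (op : (X -> Prop) -> Prop) : Prop :=
  op (fun _ => True) /\
  (forall U V, op U -> op V -> op (fun x => U x /\ V x)) /\
  (forall (I : Type) (F : I -> X -> Prop),
      (forall i, op (F i)) -> op (fun x => exists i, F i x)).

Definition continuous {X Y : Type} (opX : (X -> Prop) -> Prop)
  (opY : (Y -> Prop) -> Prop) (f : X -> Y) : Prop :=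
  forall V, opY V -> opX (fun x => V (f x)).

(* Continuity of f : X * Y -> Z for the product topology on X * Y
   (whose basic open sets are the open rectangles). *)
Definition jointly_continuous {X Y Z : Type} (opX : (X -> Prop) -> Prop)
  (opY : (Y -> Prop) -> Prop) (opZ : (Z -> Prop) -> Prop) (f : X -> Y -> Z) : Prop :=
  forall W, opZ W -> forall x y, W (f x y) ->
    exists U V, opX U /\ opY V /\ U x /\ V y /\
      (forall x' y', U x' -> V y' -> W (f x' y')).

Definition hausdorff {X : Type} (op : (X -> Prop) -> Prop) : Prop :=
  forall x y : X, x <> y -> exists U V, op U /\ op V /\ U x /\ V y /\
    (forall z, U z -> V z -> False).

Definition compact {X : Type} (op : (X -> Prop) -> Prop) : Prop :=
  forall (I : Type) (F : I -> X -> Prop),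
    (forall i, op (F i)) -> (forall x, exists i, F i x) ->
    exists l : list I, forall x, exists i, In i l /\ F i x.

Definition is_group {G : Type} (mul : G -> G -> G) (inv : G -> G) (e : G) : Prop :=
  (forall x y z, mul x (mul y z) = mul (mul x y) z) /\
  (forall x, mul e x = x) /\ (forall x, mul x e = x) /\
  (forall x, mul (inv x) x = e) /\ (forall x, mul x (inv x) = e).

Definition is_topological_group {G : Type} (mul : G -> G -> G) (inv : G -> G) (e : G)
  (op : (G -> Prop) -> Prop) : Prop :=
  is_group mul inv e /\ is_topology op /\
  jointly_continuous op op op mul /\ continuous op op inv.

Definition is_metric {X : Type} (d : X -> X -> R) : Prop :=
  (forall x y, 0 <= d x y) /\ (forall x y, d x y = 0 <-> x = y) /\
  (forall x y, d x y = d y x) /\ (forall x y z, d x z <= d x y + d y z).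

Definition metric_open {X : Type} (d : X -> X -> R) (U : X -> Prop) : Prop :=
  forall x, U x -> exists eps, 0 < eps /\ forall y, d x y < eps -> U y.

Definition metric_complete {X : Type} (d : X -> X -> R) : Prop :=
  forall u : nat -> X,
    (forall eps, 0 < eps -> exists N, forall m n, (N <= m)%nat -> (N <= n)%nat ->
        d (u m) (u n) < eps) ->
    exists l, forall eps, 0 < eps -> exists N, forall n, (N <= n)%nat -> d (u n) l < eps.

Definition separable {X : Type} (op : (X -> Prop) -> Prop) : Prop :=
  exists s : nat -> X, forall U, op U -> (exists x, U x) -> exists n, U (s n).

Definition polish {X : Type} (op : (X -> Prop) -> Prop) : Prop :=
  separable op /\
  exists d : X -> X -> R, is_metric d /\ metric_complete d /\
    (forall U, op U <-> metric_open d U).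

Definition open_subgroup {G : Type} (mul : G -> G -> G) (inv : G -> G) (e : G)
  (op : (G -> Prop) -> Prop) (H : G -> Prop) : Prop :=
  op H /\ H e /\ (forall x y, H x -> H y -> H (mul x y)) /\ (forall x, H x -> H (inv x)).

Definition non_archimedean {G : Type} (mul : G -> G -> G) (inv : G -> G) (e : G)
  (op : (G -> Prop) -> Prop) : Prop :=
  hausdorff op /\
  forall U, op U -> U e -> exists H, open_subgroup mul inv e op H /\ (forall x, H x -> U x).

Definition continuous_action {G X : Type} (mul : G -> G -> G) (e : G)
  (opG : (G -> Prop) -> Prop) (opX : (X -> Prop) -> Prop) (a : G -> X -> X) : Prop :=
  (forall x, a e x = x) /\ (forall g h x, a (mul g h) x = a g (a h x)) /\
  jointly_continuous opG opX opX a.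

Definition has_fixed_point {G X : Type} (a : G -> X -> X) : Prop :=
  exists x, forall g, a g x = x.

Definition extremely_amenable {G : Type} (mul : G -> G -> G) (e : G)
  (opG : (G -> Prop) -> Prop) : Prop :=
  forall (X : Type) (opX : (X -> Prop) -> Prop),
    is_topology opX -> compact opX -> hausdorff opX -> (exists x : X, True) ->
    forall a : G -> X -> X, continuous_action mul e opG opX a -> has_fixed_point a.

(* Cantor space {0,1}^N with the product topology of discrete {0,1}. *)
Definition cantor := nat -> bool.

Definition cantor_open (U : cantor -> Prop) : Prop :=
  forall x, U x -> exists n, forall y, (forall k, (k < n)%nat -> y k = x k) -> U y.

(* Main.v *)
Require Import Defs.
From Stdlib Require Import Reals List.
From Stdlib Require Import Classical ClassicalEpsilon FunctionalExtensionality PropExtensionality Lia Arith.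
Local Open Scope nat_scope.


Definition agree (N : nat) (f g : cantor) : Prop := forall k, k < N -> f k = g k.

Lemma agree_mono N M f g : M <= N -> agree N f g -> agree M f g.
Proof. intros H A k Hk. apply A. lia. Qed.
Lemma agree_sym N f g : agree N f g -> agree N g f.
Proof. intros A k Hk. symmetry. auto. Qed.
Lemma agree_trans N f g h : agree N f g -> agree N g h -> agree N f h.
Proof. intros A B k Hk. rewrite A; auto. Qed.

Definition bdec (P : Prop) : bool := if excluded_middle_informative P then true else false.
Lemma bdec_true (P : Prop) : bdec P = true <-> P.
Proof. unfold bdec; destruct (excluded_middle_informative P); split; intros; try tauto; discriminate. Qed.
Lemma bdec_false (P : Prop) : bdec P = false <-> ~ P.
Proof. unfold bdec; destruct (excluded_middle_informative P); split; intros; try tauto; discriminate. Qed.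
Lemma bdec_iff (P Q : Prop) : (P <-> Q) -> bdec P = bdec Q.
Proof. intros H. assert (P = Q) by (apply propositional_extensionality; auto). subst; auto. Qed.

Definition br (Y : cantor -> Prop) (f : cantor) (n : nat) : bool :=
  bdec ((exists y, Y y /\ agree n f y /\ y n = true) /\ (exists y, Y y /\ agree n f y /\ y n = false)).
Definition forced (Y : cantor -> Prop) (f : cantor) (n : nat) : bool :=
  bdec (exists y, Y y /\ agree n f y /\ y n = true).
Definition lf (l : list bool) : cantor := fun k => nth k l false.

Lemma br_ext Y f g n : agree n f g -> br Y f n = br Y g n.
Proof.
  intros A. unfold br. apply bdec_iff.
  split; intros [[y1 [H1 [H2 H3]]] [y2 [H4 [H5 H6]]]]; split.
  - exists y1; repeat split; auto. apply agree_trans with f; auto using agree_sym.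
  - exists y2; repeat split; auto. apply agree_trans with f; auto using agree_sym.
  - exists y1; repeat split; auto. apply agree_trans with g; auto.
  - exists y2; repeat split; auto. apply agree_trans with g; auto.
Qed.

Lemma forced_ext Y f g n : agree n f g -> forced Y f n = forced Y g n.
Proof.
  intros A. unfold forced. apply bdec_iff.
  split; intros [y1 [H1 [H2 H3]]].
  - exists y1; repeat split; auto. apply agree_trans with f; auto using agree_sym.
  - exists y1; repeat split; auto. apply agree_trans with g; auto.
Qed.

Fixpoint D (Y : cantor -> Prop) (w : cantor) (n : nat) : list bool * nat :=
  match n with
  | 0 => (nil, 0)
  | S n => let r := D Y w n in
     if br Y (lf (fst r)) n then (fst r ++ w (snd r) :: nil, snd r + 2)
     else (fst r ++ forced Y (lf (fst r)) n :: nil, snd r + 1)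
  end.

Definition decy Y (w : cantor) : cantor := fun k => nth k (fst (D Y w (S k))) false.
Definition decz Y (w : cantor) : cantor := fun k =>
  let r := D Y w k in if br Y (lf (fst r)) k then w (snd r + 1) else w (snd r).

Fixpoint E (Y : cantor -> Prop) (y z : cantor) (n : nat) : list bool :=
  match n with
  | 0 => nil
  | S n => E Y y z n ++ (if br Y y n then y n :: z n :: nil else z n :: nil)
  end.
Definition enc Y (y z : cantor) : cantor := fun k => nth k (E Y y z (S k)) false.

Lemma D_len Y w n : length (fst (D Y w n)) = n.
Proof.
  induction n; simpl; auto.
  destruct (br Y (lf (fst (D Y w n))) n); simpl; rewrite length_app; simpl; lia.
Qed.

Lemma D_pos Y w n : n <= snd (D Y w n) <= 2 * n.
Proof.
  induction n; simpl; auto.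
  destruct (br Y (lf (fst (D Y w n))) n); simpl; lia.
Qed.

Lemma D_S Y w n : exists b, fst (D Y w (S n)) = fst (D Y w n) ++ b :: nil.
Proof. simpl. destruct (br Y (lf (fst (D Y w n))) n); simpl; eauto. Qed.

Lemma D_prefix Y w m n k : n <= m -> k < n -> nth k (fst (D Y w m)) false = nth k (fst (D Y w n)) false.
Proof.
  induction m; intros Hnm Hk.
  - assert (n = 0) by lia. subst. lia.
  - destruct (Nat.eq_dec n (S m)). subst; auto.
    destruct (D_S Y w m) as [b Hb]. rewrite Hb. rewrite app_nth1.
    + apply IHm; lia.
    + rewrite D_len. lia.
Qed.

Lemma decy_D Y w n : agree n (decy Y w) (lf (fst (D Y w n))).
Proof. intros k Hk. unfold decy, lf. symmetry. apply D_prefix; lia. Qed.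

Lemma lf_app1 l x k : k < length l -> lf (l ++ x) k = lf l k.
Proof. intros. unfold lf. apply app_nth1; auto. Qed.
Lemma lf_app2 l b : lf (l ++ b :: nil) (length l) = b.
Proof. unfold lf. rewrite app_nth2 by lia. rewrite Nat.sub_diag. reflexivity. Qed.

Lemma D_ext Y w n : (exists y, Y y) ->
  exists y', Y y' /\ agree n (lf (fst (D Y w n))) y'.
Proof.
  intros [y0 Hy0]. induction n.
  - exists y0; split; auto. intros k Hk; lia.
  - destruct IHn as [y' [Hy' Ha]].
    pose proof (D_len Y w n) as Hl.
    simpl. set (l := fst (D Y w n)) in *.
    assert (Hext : forall b y'', Y y'' -> agree n (lf l) y'' -> y'' n = b ->
       exists y', Y y' /\ agree (S n) (lf (l ++ b :: nil)) y').
    { intros b y'' H1 H2 H3. exists y''. split; auto. intros k Hk.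
      destruct (Nat.eq_dec k n).
      - subst k. rewrite <- Hl. rewrite lf_app2. rewrite Hl. auto.
      - rewrite lf_app1 by lia. apply H2; lia. }
    destruct (br Y (lf l) n) eqn:Hb.
    + destruct (proj1 (bdec_true _) Hb) as [[y1 [? [? ?]]] [y2 [? [? ?]]]].
      destruct (w (snd (D Y w n))) eqn:Hw.
      * apply (Hext true y1); auto.
      * apply (Hext false y2); auto.
    + destruct (forced Y (lf l) n) eqn:Hf.
      * destruct (proj1 (bdec_true _) Hf) as [y1 [? [? ?]]]. apply (Hext true y1); auto.
      * pose proof (proj1 (bdec_false _) Hf) as Hf'. apply (Hext false y'); auto.
        destruct (y' n) eqn:E1; auto. exfalso. apply Hf'. exists y'; auto.
Qed.

Lemma decy_Y Y w : (forall y, (forall N, exists y', Y y' /\ agree N y y') -> Y y) ->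
  (exists y, Y y) -> Y (decy Y w).
Proof.
  intros Hcl Hne. apply Hcl. intros N.
  destruct (D_ext Y w N Hne) as [y' [Hy' Ha]]. exists y'. split; auto.
  apply agree_trans with (lf (fst (D Y w N))); auto. apply decy_D.
Qed.

Lemma E_len Y y z n : n <= length (E Y y z n).
Proof.
  induction n; simpl; auto.
  destruct (br Y y n); rewrite length_app; simpl; lia.
Qed.

Lemma E_mono Y y z m n : n <= m -> length (E Y y z n) <= length (E Y y z m).
Proof.
  induction m; intros H. assert (n = 0) by lia. subst; auto.
  destruct (Nat.eq_dec n (S m)). subst; auto.
  simpl. rewrite length_app. specialize (IHm ltac:(lia)). lia.
Qed.

Lemma E_prefix Y y z m n k : n <= m -> k < length (E Y y z n) -> nth k (E Y y z m) false = nth k (E Y y z n) false.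
Proof.
  induction m; intros Hnm Hk.
  - assert (n = 0) by lia. subst. reflexivity.
  - destruct (Nat.eq_dec n (S m)). subst; auto.
    simpl. rewrite app_nth1.
    + apply IHm; lia.
    + pose proof (E_mono Y y z m n ltac:(lia)). lia.
Qed.

Lemma enc_get Y y z k m : k < length (E Y y z m) -> enc Y y z k = nth k (E Y y z m) false.
Proof.
  intros Hk. unfold enc. destruct (le_lt_dec m (S k)).
  - apply E_prefix; auto.
  - symmetry. apply E_prefix. lia. pose proof (E_len Y y z (S k)). lia.
Qed.

Lemma lf_map y n : agree n (lf (map y (seq 0 n))) y.
Proof.
  intros k Hk. unfold lf. rewrite nth_indep with (d' := y 0) by (rewrite length_map, length_seq; lia).
  rewrite map_nth. rewrite seq_nth by lia. reflexivity.
Qed.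

Lemma dec_enc_D Y y z n : Y y ->
  D Y (enc Y y z) n = (map y (seq 0 n), length (E Y y z n)).
Proof.
  intros Hy. induction n; auto.
  cbn [D]. rewrite IHn. cbn [fst snd].
  rewrite (br_ext Y _ y n (lf_map y n)).
  rewrite (forced_ext Y _ y n (lf_map y n)).
  rewrite seq_S, map_app. cbn [map]. cbn [E]. rewrite Nat.add_0_l.
  destruct (br Y y n) eqn:Hb.
  - f_equal.
    + f_equal. f_equal. rewrite (enc_get Y y z _ (S n)).
      * simpl. rewrite Hb. rewrite app_nth2 by lia. rewrite Nat.sub_diag. reflexivity.
      * simpl. rewrite Hb, length_app. simpl. lia.
    + rewrite length_app. simpl. lia.
  - f_equal.
    + f_equal. f_equal. unfold forced. destruct (y n) eqn:Hyn.
      * apply bdec_true. exists y. repeat split; auto.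
      * apply bdec_false. intros [y1 [H1 [H2 H3]]].
        assert (br Y y n = true). { apply bdec_true. split; eauto.
          exists y; repeat split; auto. }
        congruence.
    + rewrite length_app. simpl. lia.
Qed.

Lemma dec_enc_y Y y z : Y y -> decy Y (enc Y y z) = y.
Proof.
  intros Hy. apply functional_extensionality. intros k. unfold decy.
  rewrite dec_enc_D by auto. cbn [fst].
  rewrite nth_indep with (d' := y 0) by (rewrite length_map, length_seq; lia).
  rewrite map_nth. rewrite seq_nth by lia. reflexivity.
Qed.

Lemma dec_enc_z Y y z : Y y -> decz Y (enc Y y z) = z.
Proof.
  intros Hy. apply functional_extensionality. intros k. unfold decz.
  rewrite dec_enc_D by auto. cbn [fst snd].
  rewrite (br_ext Y _ y k (lf_map y k)).
  destruct (br Y y k) eqn:Hb.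
  - rewrite (enc_get Y y z _ (S k)).
    + simpl. rewrite Hb. rewrite app_nth2 by lia.
      replace (length (E Y y z k) + 1 - length (E Y y z k)) with 1 by lia. reflexivity.
    + simpl. rewrite Hb, length_app. simpl. lia.
  - rewrite (enc_get Y y z _ (S k)).
    + simpl. rewrite Hb. rewrite app_nth2 by lia. rewrite Nat.sub_diag. reflexivity.
    + simpl. rewrite Hb, length_app. simpl. lia.
Qed.

Lemma enc_dec_E Y w n : E Y (decy Y w) (decz Y w) n = map w (seq 0 (snd (D Y w n))).
Proof.
  induction n; auto.
  simpl E. rewrite IHn.
  rewrite (br_ext Y _ (lf (fst (D Y w n))) n (decy_D Y w n)).
  assert (Hyn : decy Y w n = nth n (fst (D Y w (S n))) false) by reflexivity.
  assert (Hzn : decz Y w n = if br Y (lf (fst (D Y w n))) n then w (snd (D Y w n) + 1) else w (snd (D Y w n))) by reflexivity.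
  rewrite Hyn, Hzn. pose proof (D_len Y w n) as Hl. simpl.
  destruct (br Y (lf (fst (D Y w n))) n) eqn:Hb; simpl.
  - rewrite app_nth2 by lia. rewrite Hl, Nat.sub_diag. simpl.
    rewrite seq_app, map_app. simpl. rewrite Nat.add_1_r. reflexivity.
  - rewrite seq_app, map_app. simpl. reflexivity.
Qed.

Lemma enc_dec Y w : enc Y (decy Y w) (decz Y w) = w.
Proof.
  apply functional_extensionality. intros k.
  pose proof (D_pos Y w (S k)).
  rewrite (enc_get _ _ _ k (S k)).
  - rewrite enc_dec_E. rewrite nth_indep with (d' := w 0) by (rewrite length_map, length_seq; lia).
    rewrite map_nth, seq_nth by lia. reflexivity.
  - rewrite enc_dec_E, length_map, length_seq. lia.
Qed.

Lemma D_cont Y w w' n : agree (2 * n) w w' -> D Y w n = D Y w' n.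
Proof.
  induction n; intros A; auto.
  simpl. rewrite IHn by (apply agree_mono with (2 * S n); auto; lia).
  pose proof (D_pos Y w' n).
  rewrite (A (snd (D Y w' n))) by lia. reflexivity.
Qed.

Lemma dec_cont Y w w' n : agree (2 * n) w w' -> agree n (decy Y w) (decy Y w') /\ agree n (decz Y w) (decz Y w').
Proof.
  intros A. split; intros k Hk.
  - unfold decy. rewrite (D_cont Y w w' (S k)); auto. apply agree_mono with (2 * n); auto; lia.
  - unfold decz. rewrite (D_cont Y w w' k) by (apply agree_mono with (2 * n); auto; lia).
    pose proof (D_pos Y w' k).
    rewrite (A (snd (D Y w' k) + 1)) by lia. rewrite (A (snd (D Y w' k))) by lia. reflexivity.
Qed.

Lemma E_cont Y y y' z z' n : agree n y y' -> agree n z z' -> E Y y z n = E Y y' z' n.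
Proof.
  induction n; intros A B; auto.
  simpl. rewrite IHn by (apply agree_mono with (S n); auto; lia).
  rewrite (br_ext Y y y' n) by (apply agree_mono with (S n); auto; lia).
  rewrite (A n), (B n) by lia. reflexivity.
Qed.

Lemma enc_cont Y y y' z z' n : agree n y y' -> agree n z z' -> agree n (enc Y y z) (enc Y y' z').
Proof.
  intros A B k Hk. unfold enc. rewrite (E_cont Y y y' z z' (S k)); auto; eapply agree_mono; eauto.
Qed.

Lemma agree_open N w : cantor_open (agree N w).
Proof.
  intros x Hx. exists N. intros y Hy. apply agree_trans with x; auto. intros k Hk. symmetry; auto.
Qed.

Theorem coding (G : Type) (mul : G -> G -> G) (e : G) (opG : (G -> Prop) -> Prop)
  (Y : cantor -> Prop) (act : G -> cantor -> cantor) :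
  (forall y, (forall N, exists y', Y y' /\ agree N y y') -> Y y) ->
  (exists y, Y y) ->
  (forall g y, Y y -> Y (act g y)) ->
  (forall y, Y y -> act e y = y) ->
  (forall g h y, Y y -> act (mul g h) y = act g (act h y)) ->
  (forall g y N, exists P M, opG P /\ P g /\
      forall g' y', P g' -> agree M y y' -> agree N (act g y) (act g' y')) ->
  (forall y, Y y -> exists g, act g y <> y) ->
  exists a, continuous_action mul e opG cantor_open a /\ ~ has_fixed_point a.
Proof.
  intros Hcl Hne Hinv He Hm Hc Hnf.
  pose (a := fun g w => enc Y (act g (decy Y w)) (decz Y w)).
  assert (HY : forall w, Y (decy Y w)) by (intros; apply decy_Y; auto).
  exists a. split; [split; [|split]|].
  - intros w. unfold a. rewrite He by auto. apply enc_dec.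
  - intros g h w. unfold a. rewrite Hm by auto.
    rewrite dec_enc_y by auto. rewrite dec_enc_z by auto. reflexivity.
  - intros W HW g w HWa. destruct (HW _ HWa) as [N0 HN0].
    destruct (Hc g (decy Y w) N0) as [P [M [HP [Pg HPM]]]].
    exists P, (agree (2 * (Nat.max M N0)) w). repeat split; auto.
    + apply agree_open.
    + intros g' w' Pg' Aw. apply HN0.
      destruct (dec_cont Y w w' (Nat.max M N0) Aw) as [A1 A2].
      apply agree_sym. unfold a. apply enc_cont.
      * apply HPM; auto. apply agree_mono with (Nat.max M N0); [lia|auto].
      * apply agree_mono with (Nat.max M N0); [lia|auto].
  - intros [w Hw]. destruct (Hnf (decy Y w) (HY w)) as [g Hg]. apply Hg.
    specialize (Hw g). unfold a in Hw.
    rewrite <- (dec_enc_y Y (act g (decy Y w)) (decz Y w)) by auto.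
    rewrite Hw. reflexivity.
Qed.


Lemma cantor_top : is_topology cantor_open.
Proof.
  split; [|split].
  - intros x _. exists 0. auto.
  - intros U V HU HV x [Ux Vx]. destruct (HU x Ux) as [n1 H1]. destruct (HV x Vx) as [n2 H2].
    exists (Nat.max n1 n2). intros y Hy. split.
    + apply H1. intros k Hk. apply Hy. lia.
    + apply H2. intros k Hk. apply Hy. lia.
  - intros I F HF x [i Hi]. destruct (HF i x Hi) as [n Hn]. exists n. intros y Hy. exists i. auto.
Qed.

Lemma cantor_haus : hausdorff cantor_open.
Proof.
  intros x y Hxy.
  assert (exists k, x k <> y k) as [k Hk].
  { apply not_all_not_ex. intros H. apply Hxy. apply functional_extensionality.
    intros k. apply NNPP. auto. }
  exists (fun z => agree (S k) z x), (fun z => agree (S k) z y). repeat split.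
  - intros z Hz. exists (S k). intros w Hw. intros j Hj. rewrite Hw by auto. apply Hz; auto.
  - intros z Hz. exists (S k). intros w Hw. intros j Hj. rewrite Hw by auto. apply Hz; auto.
  - intros z H1 H2. apply Hk. rewrite <- (H1 k), <- (H2 k); auto.
Qed.

Definition covered {I : Type} (F : I -> cantor -> Prop) (f : cantor) (n : nat) : Prop :=
  exists l : list I, forall x, agree n f x -> exists i, In i l /\ F i x.

Fixpoint path {I : Type} (F : I -> cantor -> Prop) (n : nat) : list bool :=
  match n with
  | 0 => nil
  | S n => path F n ++ (if bdec (covered F (lf (path F n ++ false :: nil)) (S n)) then true else false) :: nil
  end.

Lemma path_len {I} (F : I -> cantor -> Prop) n : length (path F n) = n.
Proof. induction n; simpl; auto. rewrite length_app; simpl; lia. Qed.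

Lemma path_prefix {I} (F : I -> cantor -> Prop) m n k : n <= m -> k < n ->
  nth k (path F m) false = nth k (path F n) false.
Proof.
  induction m; intros Hnm Hk.
  - lia.
  - destruct (Nat.eq_dec n (S m)). subst; auto.
    simpl. rewrite app_nth1.
    + apply IHm; lia.
    + rewrite path_len. lia.
Qed.

Lemma cantor_compact : Defs.compact cantor_open.
Proof.
  intros I F HF Hcov. apply NNPP. intros Hno.
  assert (Hbad : forall n, ~ covered F (lf (path F n)) n).
  { induction n.
    - intros [l Hl]. apply Hno. exists l. intros x. apply Hl. intros k Hk; lia.
    - simpl. pose proof (path_len F n) as Hlen.
      set (l := path F n) in *.
      assert (Hch : forall b, (agree (S n) (lf (l ++ b :: nil))) = (fun x => agree n (lf l) x /\ x n = b)).
      { intros b. apply functional_extensionality. intros x. apply propositional_extensionality.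
        split.
        - intros A. split.
          + intros k Hk. rewrite <- A by lia. rewrite lf_app1 by lia. reflexivity.
          + rewrite <- A by lia. rewrite <- Hlen. apply lf_app2.
        - intros [A B] k Hk. destruct (Nat.eq_dec k n).
          + subst k. rewrite <- B. rewrite <- Hlen. apply lf_app2.
          + rewrite lf_app1 by lia. apply A. lia. }
      destruct (bdec (covered F (lf (l ++ false :: nil)) (S n))) eqn:Hb.
      + apply (proj1 (bdec_true _)) in Hb. intros Ht. apply IHn.
        destruct Hb as [l1 H1]. destruct Ht as [l2 H2].
        exists (l1 ++ l2). intros x Hx.
        destruct (x n) eqn:Hxn.
        * destruct (H2 x) as [i [Hi Fi]].
          { rewrite Hch. auto. }
          exists i. split; auto. apply in_or_app; auto.
        * destruct (H1 x) as [i [Hi Fi]].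
          { rewrite Hch. auto. }
          exists i. split; auto. apply in_or_app; auto.
      + exact (proj1 (bdec_false _) Hb). }
  set (x := fun k => nth k (path F (S k)) false).
  assert (Hx : forall n, agree n x (lf (path F n))).
  { intros n k Hk. unfold x, lf. symmetry. apply path_prefix; lia. }
  destruct (Hcov x) as [i Hi]. destruct (HF i x Hi) as [N HN].
  apply (Hbad N). exists (i :: nil). intros y Hy. exists i. split; [left; auto|].
  apply HN. intros k Hk. rewrite <- Hy by auto. symmetry. apply Hx; auto.
Qed.


Lemma op_ext {X} (op : (X -> Prop) -> Prop) (U U' : X -> Prop) :
  op U -> (forall x, U x <-> U' x) -> op U'.
Proof.
  intros H E. replace U' with U; auto.
  apply functional_extensionality; intros; apply propositional_extensionality; auto.
Qed.

Lemma open_local {X} (op : (X -> Prop) -> Prop) (S : X -> Prop) : is_topology op ->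
  (forall x, S x -> exists U, op U /\ U x /\ forall y, U y -> S y) -> op S.
Proof.
  intros [_ [_ Hu]] H.
  pose (F := fun (i : {x | S x}) => proj1_sig (constructive_indefinite_description _ (H _ (proj2_sig i)))).
  apply op_ext with (fun x => exists i, F i x).
  - apply Hu. intros i. unfold F. destruct (constructive_indefinite_description _ _) as [U [? [? ?]]]; auto.
  - intros x. split.
    + intros [i Hi]. revert Hi. unfold F. destruct (constructive_indefinite_description _ _) as [U [? [? ?]]]; auto.
    + intros Sx. exists (exist _ x Sx). unfold F. simpl.
      destruct (constructive_indefinite_description _ _) as [U [? [? ?]]]; auto.
Qed.

Lemma list_inter_open {X A} (op : (X -> Prop) -> Prop) (F : A -> X -> Prop) (l : list A) :
  is_topology op -> (forall a, In a l -> op (F a)) -> op (fun x => forall a, In a l -> F a x).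
Proof.
  intros Ht. pose proof Ht as [Htop [Hint _]]. induction l; intros H.
  - apply op_ext with (fun _ => True); [exact Htop|]. intros x; split; [intros _ a []|auto].
  - apply op_ext with (fun x => F a x /\ (forall b, In b l -> F b x)).
    + apply Hint. apply H; left; auto. apply IHl. intros; apply H; right; auto.
    + intros x; split.
      * intros [H1 H2] b [<-|Hb]; auto.
      * intros H1; split; [apply H1; left; auto|]. intros; apply H1; right; auto.
Qed.

Lemma exists_least (P : nat -> Prop) : (exists m, P m) -> exists m, P m /\ forall k, k < m -> ~ P k.
Proof.
  intros [m Hm]. revert Hm. induction m using lt_wf_ind. intros Hm.
  destruct (classic (exists k, k < m /\ P k)) as [[k [Hk Pk]]|Hn].
  - apply (H k Hk Pk).
  - exists m. split; auto. intros k Hk Pk. apply Hn; eauto.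
Qed.

Lemma least_unique (P Q : nat -> Prop) m m' : (forall k, P k <-> Q k) ->
  P m -> (forall k, k < m -> ~ P k) -> Q m' -> (forall k, k < m' -> ~ Q k) -> m = m'.
Proof.
  intros E Pm Hm Qm Hm'. destruct (lt_eq_lt_dec m m') as [[H|H]|H]; auto.
  - exfalso. apply (Hm' m H). apply E; auto.
  - exfalso. apply (Hm m' H). apply E; auto.
Qed.

Lemma dm_div n q r : r < n -> (q * n + r) / n = q.
Proof. intros. rewrite Nat.div_add_l by lia. rewrite Nat.div_small by lia. lia. Qed.
Lemma dm_mod n q r : r < n -> (q * n + r) mod n = r.
Proof.
  intros H. pose proof (Nat.div_mod_eq (q * n + r) n) as E. rewrite dm_div in E by auto. lia.
Qed.


Lemma grp_cancel {G} (mul : G -> G -> G) inv e : is_group mul inv e ->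
  forall a x y, mul a x = mul a y -> x = y.
Proof.
  intros [A [L [R [IL IR]]]] a x y H.
  rewrite <- (L x), <- (L y), <- (IL a), <- !A, H. reflexivity.
Qed.

Lemma grp_inv_mul {G} (mul : G -> G -> G) inv e : is_group mul inv e ->
  forall a b, inv (mul a b) = mul (inv b) (inv a).
Proof.
  intros Hg a b. pose proof Hg as [A [L [R [IL IR]]]].
  apply (grp_cancel mul inv e Hg (mul a b)). rewrite IR.
  rewrite <- A, (A b), IR, L, IR. reflexivity.
Qed.

Lemma grp_inv_inv {G} (mul : G -> G -> G) inv e : is_group mul inv e ->
  forall a, inv (inv a) = a.
Proof.
  intros Hg a. pose proof Hg as [A [L [R [IL IR]]]].
  apply (grp_cancel mul inv e Hg (inv a)). rewrite IR, IL. reflexivity.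
Qed.

Lemma lmul_open {G} (mul : G -> G -> G) (op : (G -> Prop) -> Prop) :
  is_topology op -> jointly_continuous op op op mul ->
  forall c W, op W -> op (fun x => W (mul c x)).
Proof.
  intros Ht Hj c W HW. apply open_local; auto. intros x Hx.
  destruct (Hj W HW c x Hx) as [U [V [HU [HV [Uc [Vx H]]]]]].
  exists V. split; auto.
Qed.

Lemma rmul_open {G} (mul : G -> G -> G) (op : (G -> Prop) -> Prop) :
  is_topology op -> jointly_continuous op op op mul ->
  forall d W, op W -> op (fun x => W (mul x d)).
Proof.
  intros Ht Hj d W HW. apply open_local; auto. intros x Hx.
  destruct (Hj W HW x d Hx) as [U [V [HU [HV [Ux [Vd H]]]]]].
  exists U. split; auto.
Qed.

Definition least (P : nat -> Prop) : nat :=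
  match excluded_middle_informative (exists m, P m) with
  | left H => proj1_sig (constructive_indefinite_description _ (exists_least P H))
  | right _ => 0
  end.

Lemma least_spec P : (exists m, P m) -> P (least P) /\ forall k, k < least P -> ~ P k.
Proof.
  intros H. unfold least. destruct (excluded_middle_informative _); [|tauto].
  destruct (constructive_indefinite_description _ _). simpl. auto.
Qed.

Lemma least_ext P Q : (forall k, P k <-> Q k) -> least P = least Q.
Proof.
  intros E. replace Q with P; auto. apply functional_extensionality; intros; apply propositional_extensionality; auto.
Qed.

Definition subgrp {G} (mul : G -> G -> G) inv e (V : G -> Prop) : Prop :=
  V e /\ (forall x y, V x -> V y -> V (mul x y)) /\ (forall x, V x -> V (inv x)).

Definition idx {G} (mul : G -> G -> G) inv (V : G -> Prop) (s : nat -> G) (h : G) : nat :=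
  least (fun m => V (mul (s m) (inv h))).

Lemma idx_spec {G} (mul : G -> G -> G) inv V s h :
  (exists m, V (mul (s m) (inv h))) -> V (mul (s (idx mul inv V s h)) (inv h)).
Proof. intros H. apply (least_spec _ H). Qed.

Lemma idx_eq {G} (mul : G -> G -> G) inv e V s h h' : is_group mul inv e -> subgrp mul inv e V ->
  V (mul h (inv h')) -> idx mul inv V s h = idx mul inv V s h'.
Proof.
  intros Hg [Ve [Vm Vi]] Hv. pose proof Hg as [A [L [R [IL IR]]]].
  unfold idx. apply least_ext. intros k. split; intros Hk.
  - replace (mul (s k) (inv h')) with (mul (mul (s k) (inv h)) (mul h (inv h'))); auto.
    rewrite <- A, (A (inv h)), IL, L. reflexivity.
  - replace (mul (s k) (inv h)) with (mul (mul (s k) (inv h')) (inv (mul h (inv h')))); auto.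
    rewrite (grp_inv_mul mul inv e Hg), (grp_inv_inv mul inv e Hg).
    rewrite <- A, (A (inv h')), IL, L. reflexivity.
Qed.

Lemma idx_C1 {G} (mul : G -> G -> G) inv e V s h g : is_group mul inv e -> subgrp mul inv e V ->
  (exists m, V (mul (s m) (inv h))) ->
  idx mul inv V s (mul (s (idx mul inv V s h)) g) = idx mul inv V s (mul h g).
Proof.
  intros Hg HV Hex. pose proof Hg as [A [L [R [IL IR]]]]. apply (idx_eq mul inv e); auto.
  rewrite (grp_inv_mul mul inv e Hg).
  rewrite <- A, (A g), IR, L. apply idx_spec; auto.
Qed.

Lemma idx_idem {G} (mul : G -> G -> G) inv e V s h : is_group mul inv e -> subgrp mul inv e V ->
  (exists m, V (mul (s m) (inv h))) ->
  idx mul inv V s (s (idx mul inv V s h)) = idx mul inv V s h.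
Proof. intros. apply (idx_eq mul inv e); auto. apply idx_spec; auto. Qed.

Definition gact {G} (mul : G -> G -> G) inv (V : G -> Prop) (s : nat -> G) (n : nat) (g : G) (psi : cantor) : cantor :=
  fun p => psi (idx mul inv V s (mul (s (p / n)) g) * n + p mod n).

Definition Cons {G} (mul : G -> G -> G) inv (V : G -> Prop) (s : nat -> G) (n : nat) (psi : cantor) : Prop :=
  forall p, psi p = psi (idx mul inv V s (s (p / n)) * n + p mod n).

Definition Qp {G} (mul : G -> G -> G) inv (V : G -> Prop) (s : nat -> G) (n : nat) (Gs : nat -> G) (psi : cantor) : Prop :=
  forall h, exists j, j < n /\ psi (idx mul inv V s h * n + j) <> psi (idx mul inv V s (mul (Gs j) h) * n + j).

Lemma gact_mul {G} (mul : G -> G -> G) inv e V s n g h psi : is_group mul inv e -> subgrp mul inv e V ->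
  (forall h, exists m, V (mul (s m) (inv h))) -> 0 < n ->
  gact mul inv V s n (mul g h) psi = gact mul inv V s n g (gact mul inv V s n h psi).
Proof.
  intros Hg HV Hex Hn. pose proof Hg as [A _]. apply functional_extensionality. intros p.
  unfold gact. rewrite dm_div, dm_mod by (apply Nat.mod_upper_bound; lia).
  rewrite (idx_C1 mul inv e) by auto. rewrite A. reflexivity.
Qed.

Lemma gact_e {G} (mul : G -> G -> G) inv e V s n psi : is_group mul inv e ->
  Cons mul inv V s n psi -> gact mul inv V s n e psi = psi.
Proof.
  intros Hg HC. pose proof Hg as [_ [_ [R _]]]. apply functional_extensionality. intros p.
  unfold gact. rewrite R. symmetry. apply HC.
Qed.

Lemma cons_act {G} (mul : G -> G -> G) inv e V s n g psi : is_group mul inv e -> subgrp mul inv e V ->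
  (forall h, exists m, V (mul (s m) (inv h))) -> 0 < n ->
  Cons mul inv V s n (gact mul inv V s n g psi).
Proof.
  intros Hg HV Hex Hn p. unfold gact. rewrite dm_div, dm_mod by (apply Nat.mod_upper_bound; lia).
  rewrite (idx_C1 mul inv e) by auto. reflexivity.
Qed.

Lemma Qp_act {G} (mul : G -> G -> G) inv e V s n Gs g psi : is_group mul inv e -> subgrp mul inv e V ->
  (forall h, exists m, V (mul (s m) (inv h))) -> 0 < n ->
  Qp mul inv V s n Gs psi -> Qp mul inv V s n Gs (gact mul inv V s n g psi).
Proof.
  intros Hg HV Hex Hn HQ h. pose proof Hg as [A _].
  destruct (HQ (mul h g)) as [j [Hj Hne]]. exists j. split; auto.
  unfold gact. rewrite !dm_div, !dm_mod by auto.
  rewrite !(idx_C1 mul inv e) by auto. rewrite <- A. auto.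
Qed.

Lemma Qp_nofix {G} (mul : G -> G -> G) inv e V s n Gs psi : is_group mul inv e -> subgrp mul inv e V ->
  (forall h, exists m, V (mul (s m) (inv h))) -> 0 < n ->
  Qp mul inv V s n Gs psi -> exists g, gact mul inv V s n g psi <> psi.
Proof.
  intros Hg HV Hex Hn HQ. pose proof Hg as [A [L _]].
  destruct (HQ e) as [j [Hj Hne]]. exists (mul (Gs j) e). intros Heq. apply Hne.
  transitivity (gact mul inv V s n (mul (Gs j) e) psi (idx mul inv V s e * n + j)).
  { rewrite Heq. reflexivity. }
  unfold gact. rewrite dm_div, dm_mod by auto.
  rewrite (idx_C1 mul inv e) by auto. rewrite L. reflexivity.
Qed.

Lemma list_max_in l x : In x l -> x <= list_max l.
Proof.
  intros H. pose proof (proj1 (list_max_le l (list_max l)) (Nat.le_refl _)) as F.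
  rewrite Forall_forall in F. auto.
Qed.

Lemma Y_closed {G} (mul : G -> G -> G) inv V s n Gs y : 0 < n ->
  (forall N, exists y', (Cons mul inv V s n y' /\ Qp mul inv V s n Gs y') /\ agree N y y') ->
  Cons mul inv V s n y /\ Qp mul inv V s n Gs y.
Proof.
  intros Hn H. split.
  - intros p. set (p' := idx mul inv V s (s (p / n)) * n + p mod n).
    destruct (H (S (Nat.max p p'))) as [y' [[HC _] Ha]].
    rewrite (Ha p) by lia. rewrite (Ha p') by lia. apply HC.
  - intros h.
    set (c0 := idx mul inv V s h).
    set (M := list_max (c0 :: map (fun j => idx mul inv V s (mul (Gs j) h)) (seq 0 n))).
    destruct (H (S M * n)) as [y' [[_ HQ] Ha]].
    destruct (HQ h) as [j [Hj Hne]]. exists j. split; auto.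
    assert (H1 : c0 <= M) by (apply list_max_in; left; auto).
    assert (H2 : idx mul inv V s (mul (Gs j) h) <= M).
    { apply list_max_in. right. apply in_map_iff. exists j. split; auto. apply in_seq. lia. }
    fold c0. rewrite (Ha (c0 * n + j)) by nia.
    rewrite (Ha (idx mul inv V s (mul (Gs j) h) * n + j)) by nia. auto.
Qed.

Lemma gact_cont {G} (mul : G -> G -> G) inv e opG V s n : is_topological_group mul inv e opG ->
  open_subgroup mul inv e opG V -> 0 < n ->
  forall g y N, exists P M, opG P /\ P g /\
      forall g' y', P g' -> agree M y y' -> agree N (gact mul inv V s n g y) (gact mul inv V s n g' y').
Proof.
  intros HG HV Hn g y N. destruct HG as [Hg [Ht [Hj Hi]]].
  destruct HV as [HVo [Ve [Vm Vi]]]. pose proof Hg as [A [L [R [IL IR]]]].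
  exists (fun g' => forall q, In q (seq 0 N) -> V (mul (mul (s q) g') (inv (mul (s q) g)))).
  exists (S (list_max (map (fun q => idx mul inv V s (mul (s q) g)) (seq 0 N))) * n).
  split; [|split].
  - apply list_inter_open; auto. intros q _.
    apply (lmul_open mul opG Ht Hj (s q) (fun x => V (mul x (inv (mul (s q) g))))).
    apply (rmul_open mul opG Ht Hj); auto.
  - intros q _. rewrite IR. auto.
  - intros g' y' Pg' Ha p Hp. unfold gact.
    assert (Hq : p / n < N).
    { pose proof (Nat.Div0.div_le_upper_bound p n p ltac:(nia)). lia. }
    assert (Hin : In (p / n) (seq 0 N)) by (apply in_seq; lia).
    rewrite (idx_eq mul inv e V s (mul (s (p / n)) g') (mul (s (p / n)) g) Hg (conj Ve (conj Vm Vi)) (Pg' _ Hin)).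
    apply Ha.
    assert (idx mul inv V s (mul (s (p / n)) g) <= list_max (map (fun q => idx mul inv V s (mul (s q) g)) (seq 0 N))).
    { apply list_max_in. apply in_map_iff. exists (p / n). auto. }
    pose proof (Nat.mod_upper_bound p n ltac:(lia)). nia.
Qed.

Lemma reduce {G} (mul : G -> G -> G) inv e opG V s n Gs psi0 : is_topological_group mul inv e opG ->
  open_subgroup mul inv e opG V ->
  (forall U, opG U -> (exists x, U x) -> exists m, U (s m)) -> 0 < n ->
  Cons mul inv V s n psi0 -> Qp mul inv V s n Gs psi0 ->
  exists a, continuous_action mul e opG cantor_open a /\ ~ has_fixed_point a.
Proof.
  intros HG HV Hs Hn HC HQ.
  pose proof HG as [Hg [Ht [Hj Hi]]].
  pose proof HV as [HVo [Ve [Vm Vi]]]. pose proof Hg as [A [L [R [IL IR]]]].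
  assert (HVs : subgrp mul inv e V) by (split; auto).
  assert (Hex : forall h, exists m, V (mul (s m) (inv h))).
  { intros h. apply (Hs (fun x => V (mul x (inv h)))). apply (rmul_open mul opG Ht Hj); auto. exists h. rewrite IR; auto. }
  apply (coding G mul e opG (fun y => Cons mul inv V s n y /\ Qp mul inv V s n Gs y) (gact mul inv V s n)).
  - intros y Hy. apply (Y_closed mul inv V s n Gs y Hn Hy).
  - exists psi0; auto.
  - intros g y [_ HQy]. split.
    + apply (cons_act mul inv e); auto.
    + apply (Qp_act mul inv e); auto.
  - intros y [HCy _]. apply (gact_e mul inv e); auto.
  - intros g h y _. apply (gact_mul mul inv e); auto.
  - apply (gact_cont mul inv e opG); auto.
  - intros y [_ HQy]. apply (Qp_nofix mul inv e V s n Gs); auto.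
Qed.


Lemma reverse_dir {G} (mul : G -> G -> G) inv e opG (s : nat -> G) :
  is_topological_group mul inv e opG ->
  (forall U, opG U -> (exists x, U x) -> exists m, U (s m)) ->
  (forall U, opG U -> U e -> exists H, open_subgroup mul inv e opG H /\ (forall x, H x -> U x)) ->
  (forall a : G -> cantor -> cantor, continuous_action mul e opG cantor_open a -> has_fixed_point a) ->
  extremely_amenable mul e opG.
Proof.
  intros HG Hs Hna CP X opX HtX HcX HhX [x0 _] a [Ha_e [Ha_m Ha_c]].
  apply NNPP. intros Hnf.
  pose proof HG as [Hg [Ht [Hj Hi]]]. pose proof Hg as [A [L [R [IL IR]]]].
  assert (Hmove : forall x, exists g, a g x <> x).
  { intros x. apply NNPP. intros H1. apply Hnf. exists x. intros g. apply NNPP. intros H2. apply H1. eauto. }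
  assert (Hloc : forall x, exists t : (G * (X -> Prop)) * ((X -> Prop) * (G -> Prop)),
     opX (fst (snd t)) /\ fst (snd t) x /\ open_subgroup mul inv e opG (snd (snd t)) /\
     (forall v z, snd (snd t) v -> fst (snd t) z -> snd (fst t) (a v z)) /\
     (forall z, snd (fst t) z -> snd (fst t) (a (fst (fst t)) z) -> False)).
  { intros x. destruct (Hmove x) as [g Hgx].
    destruct (HhX x (a g x)) as [U1 [W1 [HU1 [HW1 [U1x [W1g Hdis]]]]]]; auto.
    destruct (Ha_c W1 HW1 g x W1g) as [P1 [O1 [HP1 [HO1 [P1g [O1x H1]]]]]].
    set (U' := fun z => U1 z /\ O1 z).
    assert (HU' : opX U') by (apply HtX; auto).
    assert (U'ax : U' (a e x)) by (rewrite Ha_e; split; auto).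
    destruct (Ha_c U' HU' e x U'ax) as [P2 [O2 [HP2 [HO2 [P2e [O2x H2]]]]]].
    destruct (Hna P2 HP2 P2e) as [H [HH HHP]].
    exists ((g, U'), (O2, H)). simpl. split; [auto|split; [auto|split; [exact HH|split]]].
    - intros v z Hv Oz. apply H2; auto.
    - intros z [U1z O1z] [U1gz _]. apply (Hdis (a g z)); auto. }
  pose (tf := fun x => proj1_sig (constructive_indefinite_description _ (Hloc x))).
  assert (Htf : forall x, opX (fst (snd (tf x))) /\ fst (snd (tf x)) x /\ open_subgroup mul inv e opG (snd (snd (tf x))) /\
     (forall v z, snd (snd (tf x)) v -> fst (snd (tf x)) z -> snd (fst (tf x)) (a v z)) /\
     (forall z, snd (fst (tf x)) z -> snd (fst (tf x)) (a (fst (fst (tf x))) z) -> False)).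
  { intros x. unfold tf. destruct (constructive_indefinite_description _ _). simpl. auto. }
  set (gsel := fun x => fst (fst (tf x))). set (Usel := fun x => snd (fst (tf x))).
  set (Osel := fun x => fst (snd (tf x))). set (Hsel := fun x => snd (snd (tf x))).
  destruct (HcX X Osel (fun x => proj1 (Htf x)) (fun z => ex_intro (fun i => Osel i z) z (proj1 (proj2 (Htf z))))) as [l Hl].
  set (n := length l).
  assert (Hn : 0 < n).
  { destruct (Hl x0) as [y [Hy _]]. unfold n. destruct l; simpl in *; [contradiction|lia]. }
  set (V := fun v => forall y, In y l -> Hsel y v).
  assert (HV : open_subgroup mul inv e opG V).
  { assert (Hsub : forall y, open_subgroup mul inv e opG (Hsel y)) by (intros y; apply (Htf y)).
    split; [|split; [|split]].
    - apply list_inter_open; auto. intros y _. apply (Hsub y).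
    - intros y _. apply (Hsub y).
    - intros v w Hv Hw y Hy. apply (Hsub y); auto.
    - intros v Hv y Hy. apply (Hsub y); auto. }
  pose proof HV as [HVo [Ve [Vm Vi]]].
  assert (HVs : subgrp mul inv e V) by exact (conj Ve (conj Vm Vi)).
  assert (Hex : forall h, exists m, V (mul (s m) (inv h))).
  { intros h. apply (Hs (fun x => V (mul x (inv h)))). apply (rmul_open mul opG Ht Hj); auto. exists h. rewrite IR; auto. }
  set (Gs := fun j => gsel (nth j l x0)).
  set (psi0 := fun p => bdec (Osel (nth (p mod n) l x0) (a (s (idx mul inv V s (s (p / n)))) x0))).
  assert (Key : forall m y, In y l -> Osel y (a (s (idx mul inv V s m)) x0) -> Usel y (a m x0)).
  { intros m y Hy Ho. set (k := s (idx mul inv V s m)).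
    assert (Hk : V (mul k (inv m))) by (apply idx_spec; auto).
    assert (Hv : Hsel y (inv (mul k (inv m)))) by (apply Vi; auto).
    assert (Heqm : mul (inv (mul k (inv m))) k = m).
    { rewrite (grp_inv_mul mul inv e Hg), (grp_inv_inv mul inv e Hg), <- A, IL, R. reflexivity. }
    rewrite <- Heqm. rewrite Ha_m. apply (Htf y); auto. }
  destruct (reduce mul inv e opG V s n Gs psi0) as [a' [Hca' Hnf']]; auto.
  - intros p. unfold psi0. rewrite dm_div, dm_mod by (apply Nat.mod_upper_bound; lia).
    rewrite (idx_idem mul inv e) by auto. reflexivity.
  - intros h. set (z := a (s (idx mul inv V s h)) x0).
    destruct (Hl z) as [y [Hy Oz]]. destruct (In_nth l y x0 Hy) as [j [Hjl Hnth]].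
    exists j. split; auto. intros Heq. unfold psi0 in Heq.
    rewrite !dm_div, !dm_mod in Heq by auto.
    rewrite !(idx_idem mul inv e) in Heq by auto. rewrite Hnth in Heq.
    assert (Ht1 : bdec (Osel y z) = true) by (apply bdec_true; auto).
    unfold z in Ht1. rewrite Heq in Ht1. apply (proj1 (bdec_true _)) in Ht1.
    unfold Gs in Ht1. rewrite Hnth in Ht1.
    apply Key in Ht1; auto. pose proof (Key h y Hy Oz) as Ht2.
    rewrite Ha_m in Ht1. apply (proj2 (proj2 (proj2 (proj2 (Htf y)))) (a h x0)); auto.
Qed.

Local Close Scope nat_scope.

Theorem theorem2p3p6 (G : Type) (mul : G -> G -> G) (inv : G -> G) (e : G)
  (opG : (G -> Prop) -> Prop)
  (HG : is_topological_group mul inv e opG)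
  (Hpol : polish opG)
  (Hna : non_archimedean mul inv e opG) :
  extremely_amenable mul e opG <->
  (forall a : G -> cantor -> cantor,
      continuous_action mul e opG cantor_open a -> has_fixed_point a).
Proof.
  split.
  - intros HEA a Ha. apply (HEA cantor cantor_open cantor_top cantor_compact cantor_haus
      (ex_intro _ (fun _ => false) I)); auto.
  - intros CP. destruct Hpol as [[s Hs] _]. destruct Hna as [_ Hna].
    apply (reverse_dir mul inv e opG s); auto.
Qed.
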